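(* There exist absolute constants $c>0$ and $n_0$ such that for every $n\ge n_0$ and every $p$ with $1-\frac{1}{10n}\le p\le 1$, if $G\sim G(n,p)$ then $$\mathbb{P}(G\text{ is even-decomposable})\le e^{-cn}.$$
   Context: $G(n,p)$ is the binomial random graph on $n$ labelled vertices in which each pair is an edge independently with probability $p$. A graph $H$ is even-decomposable if there is a sequence $V(H)=V_0\supset V_1\supset\cdots\supset V_k=\emptyset$ such that for each $0\le i\le k-1$, the induced subgraph $H[V_i]$ has an even number of edges and $V_i\setminus V_{i+1}$ is an independent set in $H$. *)

(* Defs.v *)
From Stdlib Require Import Reals.
From HB Require Import structures.
From mathcomp Require Import all_boot all_order all_algebra.
From mathcomp Require Import boolp Rstruct.
Set Implicit Arguments. Unset Strict Implicit. Unset Printing Implicit Defensive.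
Import Order.TTheory GRing.Theory Num.Theory.

Definition pairs (n : nat) : {set 'I_n * 'I_n} := [set e : 'I_n * 'I_n | (e.1 < e.2)%N].

(* A labelled simple graph on 'I_n is an edge set E \subset pairs n. *)

Definition induced_edges n (E : {set 'I_n * 'I_n}) (V : {set 'I_n}) : nat :=
  #|[set e in E | (e.1 \in V) && (e.2 \in V)]|.

Definition independent n (E : {set 'I_n * 'I_n}) (I : {set 'I_n}) : Prop :=
  forall e, e \in E -> ~~ ((e.1 \in I) && (e.2 \in I)).

Definition even_decomposable n (E : {set 'I_n * 'I_n}) : Prop :=
  exists s : seq {set 'I_n},
    [/\ (0 < size s)%N,
        nth set0 s 0 = [set: 'I_n],
        nth set0 s (size s).-1 = set0 &
        forall i, (i < (size s).-1)%N ->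
          [/\ nth set0 s i.+1 \proper nth set0 s i,
              ~~ odd (induced_edges E (nth set0 s i)) &
              independent E (nth set0 s i :\: nth set0 s i.+1)]].

Local Open Scope ring_scope.

Definition Gnp_prob (n : nat) (p : R) (P : {set 'I_n * 'I_n} -> Prop) : R :=
  \sum_(E in powerset (pairs n) | `[< P E >]) 
     p ^+ #|E| * (1 - p) ^+ (#|pairs n| - #|E|).

(* Main.v *)
Require Import Defs.
From Stdlib Require Import Reals.
From mathcomp Require Import all_boot all_order all_algebra.
From mathcomp Require Import boolp Rstruct.
From mathcomp Require Import zify ring lra.
Set Implicit Arguments. Unset Strict Implicit. Unset Printing Implicit Defensive.

Section Comb.
Variable n : nat.
Variable E : {set 'I_n * 'I_n}.
Hypothesis HE : E \subset pairs n.

Definition nonE := pairs n :\: E.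
Definition T := [set v : 'I_n | [exists e in nonE, (e.1 == v) || (e.2 == v)]].
Definition mkp (v w : 'I_n) : 'I_n * 'I_n := if (v < w)%N then (v, w) else (w, v).
Definition other (v : 'I_n) (e : 'I_n * 'I_n) := if e.1 == v then e.2 else e.1.

Lemma card_T : #|T| <= 2 * #|nonE|.
Proof.
have sub : T \subset (fst @: nonE) :|: (snd @: nonE).
  apply/subsetP => v; rewrite inE => /existsP [e /andP [He /orP [/eqP <-|/eqP <-]]].
    by rewrite inE; apply/orP; left; apply: imset_f.
  by rewrite inE; apply/orP; right; apply: imset_f.
apply: (leq_trans (subset_leq_card sub)).
apply: (leq_trans (leq_card_setU _ _)).
by rewrite mul2n -addnn leq_add // leq_imset_card.
Qed.

Lemma other_mkp v w : w != v -> other v (mkp v w) = w.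
Proof.
move=> wv; rewrite /mkp; case: ifP => _; rewrite /other /=; first by rewrite eqxx.
by rewrite (negbTE wv).
Qed.

Lemma mkp_pairs v w : w != v -> mkp v w \in pairs n.
Proof.
rewrite /mkp /pairs inE => wv; case: ifP => //= h.
rewrite ltn_neqAle leqNgt h andbT.
by apply: contra wv => /eqP/val_inj ->.
Qed.

Lemma untouched_edge v w : v \notin T -> w != v -> mkp v w \in E.
Proof.
move=> vT wv; apply/negPn/negP => hn.
move: vT; rewrite inE => /existsP; apply; exists (mkp v w).
rewrite /nonE inE hn mkp_pairs //=.
by rewrite /mkp; case: ifP => _ /=; rewrite eqxx ?orbT.
Qed.

Lemma mkp_mem (D : {set 'I_n}) v w : v \in D -> w \in D ->
  ((mkp v w).1 \in D) && ((mkp v w).2 \in D).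
Proof. by rewrite /mkp; case: ifP => _ /= -> ->. Qed.

Lemma edge_count (V : {set 'I_n}) v : v \in V -> v \notin T ->
  induced_edges E V = induced_edges E (V :\ v) + #|V :\ v|.
Proof.
move=> vV vT; rewrite /induced_edges.
set S := [set e in E | _].
set X := [set e : 'I_n * 'I_n | (e.1 == v) || (e.2 == v)].
rewrite -(cardsID X S) addnC; congr (_ + _).
  apply: eq_card => e; rewrite !inE.
  by case: (e.1 == v); case: (e.2 == v); rewrite ?andbF ?andbT //= ?andbA.
have -> : S :&: X = mkp v @: (V :\ v).
  apply/setP => e; rewrite !inE; apply/idP/idP.
    case/andP => /andP [eE /andP [e1 e2]] eX.
    have lt : (e.1 < e.2)%N by move/subsetP: HE => /(_ e eE); rewrite inE.
    case/orP: eX => /eqP ev.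
      apply/imsetP; exists e.2; first by rewrite !inE e2 andbT; apply/eqP => h;
        move: lt; rewrite ev h ltnn.
      by rewrite /mkp -ev lt; case: e {e1 e2 eE lt ev}.
    apply/imsetP; exists e.1; first by rewrite !inE e1 andbT; apply/eqP => h;
      move: lt; rewrite ev h ltnn.
    by rewrite /mkp -ev ltnNge (ltnW lt) /=; case: e {e1 e2 eE lt ev}.
  case/imsetP => w; rewrite !inE => /andP [wv wV] ->.
  rewrite untouched_edge //= mkp_mem //=.
  by rewrite /mkp; case: ifP => _ /=; rewrite eqxx ?orbT.
rewrite card_in_imset // => w1 w2; rewrite !inE => /andP [h1 _] /andP [h2 _] eq.
by rewrite -(other_mkp h1) eq other_mkp.
Qed.


Lemma step_shape (A B : {set 'I_n}) : B \proper A -> independent E (A :\: B) ->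
  (A :\: B \subset T) \/ (exists2 v, v \notin T & A :\: B = [set v]).
Proof.
move=> pBA ind.
case: (boolP (A :\: B \subset T)) => [h|]; first by left.
case/subsetPn => v vD vT; right; exists v => //.
apply/setP => w; rewrite in_set1; apply/idP/idP; last by move/eqP ->.
move=> wD; apply/negPn/negP => wv.
move: (ind _ (untouched_edge vT wv)); by rewrite mkp_mem.
Qed.

Lemma ie_set0 : induced_edges E set0 = 0%N.
Proof.
rewrite /induced_edges; apply: eq_card0 => e.
by rewrite !inE /= ?andbF.
Qed.

Lemma clean_eq (A B : {set 'I_n}) v : B \subset A -> A :\: B = [set v] -> B = A :\ v.
Proof.
move=> sBA hD; apply/setP => x; rewrite !inE.
case: (boolP (x \in B)) => xB.
  rewrite (subsetP sBA _ xB) andbT; apply/esym/eqP => xv.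
  have : x \in A :\: B by rewrite hD xv set11.
  by rewrite inE xB.
apply/esym/negP => /andP [xv xA].
have : x \in A :\: B by rewrite inE xB xA.
by rewrite hD inE (negbTE xv).
Qed.

Lemma decomp_bound : even_decomposable E -> n <= 2 * #|T| + 1.
Proof.
case=> s [s0 sfirst slast hstep].
set k := (size s).-1 in slast hstep.
pose V i := nth set0 s i.
pose a i := #|V i :\: T|.
pose b i := #|V i :&: T|.
pose clean i := exists2 v, v \notin T & V i :\: V i.+1 = [set v].
have odd_clean i : i < k -> clean i -> odd #|V i|.
  move=> ik [v vT hD].
  have [pr ev _] := hstep i ik.
  have vV : v \in V i.
    have : v \in V i :\: V i.+1 by rewrite hD set11.
    by rewrite inE => /andP [].
  have eqB := clean_eq (proper_sub pr) hD.
  have ev1 : ~~ odd (induced_edges E (V i.+1)).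
    case: (ltnP i.+1 k) => h; first by have [_ ? _] := hstep _ h.
    have -> : i.+1 = k by apply/eqP; rewrite eqn_leq h ik.
    by rewrite /V slast ie_set0.
  move: ev; rewrite (edge_count vV vT) -/(V i.+1) -eqB oddD (negbTE ev1) /=.
  by rewrite (cardsD1 v (V i)) vV eqB /= => ->.
pose P i := a i <= b i \/ (a i <= b i + 1 /\ i < k /\ clean i).
have key : forall j, j <= k -> P (k - j).
  elim=> [|j IH] jk.
    by left; rewrite subn0 /a /b /V slast set0D set0I cards0.
  have ik : k - j.+1 < k by lia.
  have e1 : (k - j.+1).+1 = k - j by lia.
  have IH' := IH (ltnW jk); rewrite -e1 in IH'.
  set i := k - j.+1 in ik e1 IH' *.
  have [pr ev ind] := hstep i ik.
  case: (step_shape pr ind) => [dirty|[v vT hD]].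
    left.
    have ea : a i = a i.+1.
      rewrite /a; apply: eq_card => x; rewrite !inE.
      case: (boolP (x \in V i.+1)) => xB.
        by rewrite (subsetP (proper_sub pr) _ xB).
      case: (boolP (x \in V i)) => xA; rewrite ?andbF //.
      have xT : x \in T by apply: (subsetP dirty); rewrite inE xB xA.
      by move: xT; rewrite inE => ->.
    have eb : b i.+1 < b i.
      rewrite /b; apply: proper_card; apply/properP; split.
        by apply: setSI; apply: proper_sub.
      case/properP: pr => _ [x xA xB]; exists x; last by rewrite inE (negbTE xB).
      by rewrite in_setI xA (subsetP dirty x) // inE xB xA.
    case: IH' => [h|[h _]]; lia.
  have eqB := clean_eq (proper_sub pr) hD.
  have vV : v \in V i.
    have : v \in V i :\: V i.+1 by rewrite hD set11.
    by rewrite inE => /andP [].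
  have ea : a i = (a i.+1).+1.
    rewrite /a (cardsD1 v (V i :\: T)) in_setD vT vV /= add1n; congr (_.+1).
    rewrite /V eqB; apply: eq_card => x; rewrite !in_setD ?in_setD1 ?in_set1.
    by case: (x == v); case: (x \in T).
  have eb : b i = b i.+1.
    rewrite /b /V eqB; apply: eq_card => x; rewrite !in_setI !in_setD1.
    case: (boolP (x \in T)) => xT; rewrite ?andbF ?andbT //.
    suff -> : x != v by [].
    by apply/eqP => xv; move: vT; rewrite -xv xT.
  have cl : clean i by exists v.
  right; split; last by [].
  case: IH' => [h|[_ [ik1 cl1]]]; first lia.
  have o1 := odd_clean _ ik cl.
  have o2 := odd_clean _ ik1 cl1.
  move: o1 o2; rewrite /V (cardsD1 v (nth set0 s i)) vV -eqB /=.
  by move=> /negP.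
have hC := cardsC T; rewrite card_ord in hC.
have := key k (leqnn k); rewrite subnn /P /a /b /V sfirst setTI setTD.
move: hC; set t1 := #|T|; set t2 := #|~: T|; move=> hC; case=> [h|[h _]]; lia.
Qed.

End Comb.
Import Order.TTheory GRing.Theory Num.Theory.
Local Open Scope ring_scope.

Lemma sum_subsets (I : finType) (A : {set I}) (y : R) :
  \sum_(J : {set I}) \prod_(i : I) (if i \in J then (if i \in A then 1 else 0)
                                    else (if i \in A then y else 1)) = (1 + y) ^+ #|A|.
Proof.
rewrite -(@bigA_distr R 0 1 *%R +%R I (fun i => if i \in A then 1 else 0)
           (fun i => if i \in A then y else 1)).
rewrite -prodr_const (big_mkcond (fun i => i \in A)) /=.
by apply: eq_bigr => i _; case: (i \in A); rewrite ?add0r.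
Qed.

Lemma exp_addR (x y : R) : exp (x + y) = exp x * exp y.
Proof. exact: exp_plus. Qed.

Lemma exp_pow (x : R) (m : nat) : exp x ^+ m = exp (x * m%:R).
Proof.
elim: m => [|m IH].
  by rewrite RmultE expr0 (_ : x * 0%:R = 0); [apply/esym/exp_0 | ring].
by rewrite exprS IH RmultE -exp_addR mulrS; congr exp; rewrite ?RealsE; ring.
Qed.

Lemma exp_le (x y : R) : x <= y -> exp x <= exp y.
Proof.
rewrite le_eqVlt => /orP [/eqP -> //|/RltP h].
by apply/ltW/RltP/exp_increasing.
Qed.

Lemma exp_ge1 (x : R) : 1 + x <= exp x.
Proof. by apply/RleP; apply: exp_ineq1_le. Qed.

Lemma exp_gt0 (x : R) : 0 < exp x.
Proof. by apply/RltP; apply: exp_pos. Qed.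

Lemma card_pairs n : (2 * #|pairs n| <= n * n)%N.
Proof.
set A := pairs n.
set B := (fun e : 'I_n * 'I_n => (e.2, e.1)) @: A.
have cB : #|B| = #|A|.
  rewrite /B card_imset // => -[a b] -[c d] /= [h1 h2]; by rewrite h1 h2.
have AB : A :&: B = set0.
  apply/setP => [[a b]]; rewrite !inE; apply/negP => /andP [h /imsetP [[c d]]].
  rewrite inE /= => h2 [ea eb]; move: h h2; rewrite ea eb /=; lia.
have := cardsUI A B; rewrite AB cards0 addn0 cB => h.
have := subset_leq_card (subsetT (A :|: B)).
by rewrite cardsT card_prod card_ord; lia.
Qed.

Lemma arith_r n a b : (n <= 2 * a + 1)%N -> (a <= 2 * b)%N -> (n.-1 %/ 4 <= b)%N.
Proof. lia. Qed.

Lemma arith_r2 n : (n <= 4 * (n.-1 %/ 4) + 4)%N.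
Proof. lia. Qed.

Theorem mainTheorem3 :
  exists (c : R) (n0 : nat), (0 < c)%R /\
    forall (n : nat) (p : R), (n0 <= n)%N ->
      (1 - (10 * n%:R)^-1 <= p <= 1)%R ->
      (@Gnp_prob n p (@even_decomposable n) <= exp (- c * n%:R))%R.
Proof.
exists (20^-1 : R), 20%N; split; first by rewrite invr_gt0 ltr0n.
move=> n p hn /andP [hp1 hp2].
set q := 1 - p.
set N := #|pairs n|.
set nR := n%:R : R.
have nR20 : 20 <= nR by rewrite /nR ler_nat.
set x := (10 * nR)^-1.
have hx : x * (10 * nR) = 1 by rewrite mulVf //; apply/lt0r_neq0; lra.
have x0 : 0 <= x by rewrite invr_ge0; lra.
have q0 : 0 <= q by rewrite /q subr_ge0.
have qx : q <= x by move: hp1; rewrite /q /x /nR; lra.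
have x1 : x <= 1.
  have : 0 <= x * (nR - 20) by apply: mulr_ge0 => //; lra.
  nra.
have p0 : 0 <= p by move: qx; rewrite /q; lra.
set r := (n.-1 %/ 4)%N.
set y := 3 * q.
have y0 : 0 <= y by rewrite /y; lra.
have r3 : 0 < 3 ^+ r :> R by apply: exprn_gt0; lra.
have step : Gnp_prob p (@even_decomposable n) <=
   \sum_(J : {set 'I_n * 'I_n}) (\prod_(i : 'I_n * 'I_n) (if i \in J then (if i \in pairs n then 1 else 0)
                                    else (if i \in pairs n then y else 1)) / 3 ^+ r).
  rewrite /Gnp_prob big_mkcond /=; apply: ler_sum => E _.
  case: ifP => [/andP [hEp /asboolP hP] | _]; last first.
    apply: divr_ge0; last by apply: ltW.
    by apply: prodr_ge0 => i _; repeat case: ifP => _; lra.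
  have hsub : E \subset pairs n by rewrite -powersetE.
  have hf : (r <= #|pairs n :\: E|)%N.
    exact: arith_r (decomp_bound hsub hP) (card_T E).
  have hcard : #|pairs n :\: E| = (N - #|E|)%N by rewrite cardsD (setIidPr hsub).
  have prodE : \prod_(i : 'I_n * 'I_n) (if i \in E then (if i \in pairs n then 1 else 0)
                                    else (if i \in pairs n then y else 1)) = y ^+ (N - #|E|).
    rewrite -hcard -prodr_const [RHS]big_mkcond /=; apply: eq_bigr => i _; rewrite in_setD.
    case: (boolP (i \in E)) => iE /=; last by case: (i \in pairs n).
    by rewrite (subsetP hsub _ iE).
  rewrite prodE -hcard.
  set f := #|pairs n :\: E|.
  apply: (@le_trans _ _ (q ^+ f)).
    by apply: ler_piMl; [apply: exprn_ge0 | apply: exprn_ile1].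
  rewrite ler_pdivlMr // /y exprMn mulrC; apply: ler_wpM2r; first exact: exprn_ge0.
  by apply: ler_weXn2l => //; lra.
apply: (le_trans step).
rewrite -mulr_suml sum_subsets -/N ler_pdivrMr //.
have e1 : (1 + y) ^+ N <= exp (y * N%:R).
  rewrite -exp_pow; apply: lerXn2r; rewrite ?nnegrE; [lra | apply/ltW/exp_gt0 | exact: exp_ge1].
have e2 : exp (r%:R) <= 3 ^+ r :> R.
  rewrite -[r%:R]mul1r -exp_pow; apply: lerXn2r; rewrite ?nnegrE; [apply/ltW/exp_gt0 | lra |].
  by apply/RleP; apply: exp_le_3.
have hN : (N%:R * 2 <= nR * nR).
  by have := card_pairs n; rewrite -(ler_nat R) !natrM mulrC.
have hr : nR <= 4 * r%:R + 4.
  have := arith_r2 n; rewrite -/r.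
  by rewrite -(ler_nat R) natrD natrM.
have h1 : q * N%:R <= x * N%:R by apply: ler_wpM2r.
have h2 : x * (N%:R * 2) <= x * (nR * nR) by apply: ler_wpM2l.
have h3 : x * nR * nR = nR / 10.
  have -> : nR / 10 = x * (10 * nR) * nR / 10 by rewrite hx mul1r.
  by field.
have hineq : y * N%:R <= - 20^-1 * nR + r%:R.
  rewrite /y; lra.
apply: (le_trans e1).
apply: (@le_trans _ _ (exp (- 20^-1 * nR) * exp r%:R)).
  rewrite -exp_addR; apply: exp_le; rewrite RmultE RoppE; exact: hineq.
rewrite RmultE RoppE; apply: ler_wpM2l => //; apply/ltW/exp_gt0.
Qed.
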